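(* The map $\phi$ from the poset $\mathcal{FP}$ of nonempty faces of $V_O$ (ordered by inclusion) to the poset $\mathcal{SC}$, given by $\phi(F)=\bigcup_{\lambda\in\Xi_1,\ F\subseteq H_\lambda}\mathrm{supp}(\lambda)$, is injective and order-preserving: if $F_1\subseteq F_2$ then $\phi(F_1)\preceq\phi(F_2)$.
   Context: $G=(V,E)$ is a finite connected graph, possibly with parallel edges and loops; $\mathbb E$ is the set of oriented edges ($e$ and its reverse $\bar e$). Real $1$-chains $x:\mathbb E\to\mathbb R$ satisfy $x_{\bar e}=-x_e$; $\langle x,y\rangle=\sum_{e\in E}x_ey_e$, $q(x)=\langle x,x\rangle$. A flow satisfies $\sum_{e\text{ with tail }v}x_e=0$ at every vertex $v$; $H$ is the space of real flows and $\Lambda$ the lattice of integer flows. $V_O=\{x\in H: q(x)\le q(x-\mu)\ \forall\mu\in\Lambda\}$. For a flow $x$, $\mathrm{supp}(x)=\{e\in\mathbb E: x_e>0\}$. A circuit is an orientation of a cycle as a directed cycle; $x^C_e=1$ if $e\in C$, $-1$ if $\bar e\in C$, $0$ otherwise. $\Xi_1=\{x^C: C\text{ a circuit}\}$; for $\lambda\in\Xi_1$, $H_\lambda=\{x\in H: 2\langle x,\lambda\rangle=q(\lambda)\}$. $\mathcal{SC}$ is the set of pairs $(H',D)$ with $H'$ a subgraph of $G$ (identified with its edge set) and $D$ a strongly connected orientation of $H'$ (on each component any two vertices are joined by directed paths both ways), ordered by $(H_1,D_1)\preceq(H_2,D_2)$ iff $H_2\subseteq H_1$ and $D_2$ is the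 restriction of $D_1$ to $H_2$. *)

(* Defs.v *)
From HB Require Import structures.
From mathcomp Require Import all_boot all_order all_algebra.
From Stdlib Require Import Relations.
Set Implicit Arguments. Unset Strict Implicit. Unset Printing Implicit Defensive.
Import Order.TTheory GRing.Theory Num.Theory.
Local Open Scope ring_scope.

Section Graph.
Variables (R : realFieldType) (V E : finType) (src tgt : E -> V).
(* A multigraph (parallel edges / loops allowed): each edge e has a reference
   orientation from [src e] to [tgt e].  Oriented edges are pairs (e, b):
   (e, false) is e, (e, true) is its reverse \bar e. *)

Definition otail (o : E * bool) : V := if o.2 then tgt o.1 else src o.1.
Definition ohead (o : E * bool) : V := if o.2 then src o.1 else tgt o.1.

Definition adjG (u v : V) : Prop :=
  exists e, (src e = u /\ tgt e = v) \/ (src e = v /\ tgt e = u).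
Definition connected_graph : Prop := forall u v, clos_refl_trans V adjG u v.

(* Real 1-chains: values on reference orientations; x_{\bar e} = - x_e. *)
Definition ochain (x : E -> R) (o : E * bool) : R := if o.2 then - x o.1 else x o.1.
Definition inner (x y : E -> R) : R := \sum_(e : E) x e * y e.
Definition qf (x : E -> R) : R := inner x x.

Definition is_flow (x : E -> R) : Prop :=
  forall v : V, \sum_(o : E * bool | otail o == v) ochain x o = 0.
Definition is_int_flow (mu : E -> R) : Prop :=
  is_flow mu /\ exists z : E -> int, forall e, mu e = (z e)%:~R.

Definition in_VO (x : E -> R) : Prop :=
  is_flow x /\ forall mu, is_int_flow mu -> qf x <= qf (fun e => x e - mu e).

(* Nonempty faces of V_O (faces of the polytope V_O = exposed faces). *)
Definition face_VO (F : (E -> R) -> Prop) : Prop :=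
  exists (a : E -> R) (b : R),
    (forall y, in_VO y -> inner a y <= b) /\
    (forall x, F x <-> (in_VO x /\ inner a x = b)).
Definition nonempty_face_VO (F : (E -> R) -> Prop) : Prop :=
  face_VO F /\ exists x, F x.

Definition is_circuit (c : seq (E * bool)) : Prop :=
  [/\ c != [::], uniq (map fst c), uniq (map otail c)
    & cycle (fun o1 o2 => ohead o1 == otail o2) c].
Definition xC (c : seq (E * bool)) (e : E) : R :=
  if (e, false) \in c then 1 else if (e, true) \in c then -1 else 0.
Definition in_Xi1 (lam : E -> R) : Prop :=
  exists c, is_circuit c /\ forall e, lam e = xC c e.
Definition in_Hlam (lam x : E -> R) : Prop :=
  is_flow x /\ 2 * inner x lam = qf lam.
Definition supp (x : E -> R) (o : E * bool) : Prop := 0 < ochain x o.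

Definition phi (F : (E -> R) -> Prop) (o : E * bool) : Prop :=
  exists lam, [/\ in_Xi1 lam, (forall x, F x -> in_Hlam lam x) & supp lam o].

(* SC: a set D of oriented edges encodes the pair (H', D) with H' = und D. *)
Definition und (D : E * bool -> Prop) (e : E) : Prop := D (e, false) \/ D (e, true).
Definition is_orientation (D : E * bool -> Prop) : Prop :=
  forall e, ~ (D (e, false) /\ D (e, true)).
Definition darc (D : E * bool -> Prop) (u v : V) : Prop :=
  exists o, [/\ D o, otail o = u & ohead o = v].
Definition strongly_connected (D : E * bool -> Prop) : Prop :=
  forall u v, clos_refl_trans V (fun a b => darc D a b \/ darc D b a) u v ->
              clos_refl_trans V (darc D) u v.
Definition in_SC (D : E * bool -> Prop) : Prop :=
  is_orientation D /\ strongly_connected D.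
Definition SC_le (D1 D2 : E * bool -> Prop) : Prop :=
  (forall e, und D2 e -> und D1 e) /\ (forall o, D2 o <-> (D1 o /\ und D2 o.1)).

End Graph.

(* Main.v *)
Require Import Defs.
From HB Require Import structures.
From mathcomp Require Import all_boot all_order all_algebra.
From Stdlib Require Import Relations Classical ClassicalEpsilon.
Set Implicit Arguments. Unset Strict Implicit. Unset Printing Implicit Defensive.
Import Order.TTheory GRing.Theory Num.Theory.
Local Open Scope ring_scope.

Section Work.
Variables (R : realFieldType) (V E : finType) (src tgt : E -> V).
Notation A := (E * bool)%type.
Notation otail := (Defs.otail src tgt).
Notation ohead := (Defs.ohead src tgt).
Notation xC := (xC R).

Definition flipo (o : A) : A := (o.1, ~~ o.2).
Lemma otail_flip o : otail (flipo o) = ohead o.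
Proof. by case: o => e []. Qed.
Lemma ohead_flip o : ohead (flipo o) = otail o.
Proof. by case: o => e []. Qed.
Lemma ochain_flip (x : E -> R) o : ochain x (flipo o) = - ochain x o.
Proof. by case: o => e [] /=; rewrite /ochain /= ?opprK. Qed.
Lemma flipoK : involutive flipo.
Proof. by case=> e b; rewrite /flipo negbK. Qed.

Lemma sum_pairE (F : A -> R) : \sum_(o : A) F o = \sum_(e : E) (F (e, false) + F (e, true)).
Proof.
transitivity (\sum_e \sum_(b : bool) F (e, b)).
  by rewrite pair_bigA; apply: eq_bigr => -[].
by apply: eq_bigr => e _; rewrite big_bool addrC.
Qed.

Lemma qf_sub (x mu : E -> R) :
  qf (fun e => x e - mu e) = qf x - 2 * inner x mu + qf mu.
Proof.
rewrite /qf /inner mulr_sumr -sumrB -big_split /=; apply: eq_bigr => e _.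
rewrite mulrBl !mulrBr (mulrC (mu e) (x e)) mulrA mulr2n mulrDl !mul1r.
by rewrite mulrDl opprB opprD !addrA [in RHS]addrAC.
Qed.


Lemma uniq_fst_mem (c : seq A) e b b' :
  uniq (map fst c) -> (e, b) \in c -> (e, b') \in c -> b = b'.
Proof.
elim: c => //= o c IH /andP[nf u].
rewrite !in_cons => /orP[/eqP h1|h1] /orP[/eqP h2|h2].
- by rewrite -h1 in h2; case: h2.
- by exfalso; move/negP: nf; apply; rewrite -h1; apply/mapP; exists (e, b').
- by exfalso; move/negP: nf; apply; rewrite -h2; apply/mapP; exists (e, b).
- exact: IH.
Qed.

Lemma flip_notin (c : seq A) o : uniq (map fst c) -> o \in c -> flipo o \notin c.
Proof.
case: o => e b u h; apply/negP => h'.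
by have := uniq_fst_mem u h h'; case: b {h h'}.
Qed.

Lemma ochain_xC (c : seq A) o : uniq (map fst c) ->
  ochain (xC c) o = if o \in c then 1 else if flipo o \in c then -1 else 0.
Proof.
move=> u; case: o => e [] /=; rewrite /ochain /xC /flipo /=.
- case: ifP => h1; case: ifP => h2 //.
  + by have := uniq_fst_mem u h1 h2.
  + by rewrite opprK.
  + by rewrite oppr0.
- by [].
Qed.

Lemma sum_in (c : seq A) (F : A -> R) : uniq c ->
  \sum_(o : A) (if o \in c then F o else 0) = \sum_(o <- c) F o.
Proof. by move=> u; rewrite -big_mkcond big_uniq. Qed.

Lemma inner_xC (c : seq A) (y : E -> R) : uniq (map fst c) ->
  inner y (xC c) = \sum_(o <- c) ochain y o.
Proof.
move=> u; have uc : uniq c by exact: map_uniq u.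
rewrite -sum_in // sum_pairE /inner; apply: eq_bigr => e _.
rewrite /xC /ochain /=.
case: ifP => h1; case: ifP => h2 //.
- by have := uniq_fst_mem u h1 h2.
- by rewrite mulr1 addr0.
- by rewrite mulrN1 add0r.
- by rewrite mulr0 addr0.
Qed.

Lemma qf_xC (c : seq A) : uniq (map fst c) -> qf (xC c) = (size c)%:R.
Proof.
move=> u; rewrite /qf inner_xC //.
rewrite (eq_big_seq (fun _ => 1)); last first.
  by move=> o oc; rewrite ochain_xC // oc.
by rewrite -sum1_size natr_sum.
Qed.

Definition hrel (o1 o2 : A) := ohead o1 == otail o2.

Lemma path_ht (x : A) s :
  path hrel x s = (map otail s == belast (ohead x) (map ohead s)).
Proof.
elim: s x => //= y s IH x; rewrite IH eqseq_cons /hrel eq_sym //.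
Qed.

Lemma cycle_rcons (c : seq A) o : cycle hrel (o :: c) ->
  rcons (map otail c) (otail o) = ohead o :: map ohead c.
Proof.
rewrite /= path_ht => /eqP; rewrite !map_rcons belast_rcons.
by [].
Qed.

Lemma cycle_perm (c : seq A) : cycle hrel c ->
  perm_eq (map otail c) (map ohead c).
Proof.
case: c => // o c h; have := cycle_rcons h => /= <-.
by rewrite perm_sym perm_rcons.
Qed.

Lemma cycle_sum (c : seq A) (G : V -> R) : cycle hrel c ->
  \sum_(o <- c) G (otail o) = \sum_(o <- c) G (ohead o).
Proof.
move=> h; rewrite -(big_map otail xpredT G) -(big_map ohead xpredT G).
exact: perm_big (cycle_perm h).
Qed.

Lemma xC_flow (c : seq A) : uniq (map fst c) -> cycle hrel c ->
  is_flow src tgt (xC c).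
Proof.
move=> u cy v; have uc : uniq c by exact: map_uniq u.
under eq_bigr => o _ do rewrite ochain_xC //.
transitivity (\sum_(o | otail o == v) ((if o \in c then 1 else 0) - (if flipo o \in c then 1 else 0)) : R).
  apply: eq_bigr => o _; case: ifP => h1.
    by rewrite (negbTE (flip_notin u h1)) subr0.
  case: ifP => h2; [by rewrite sub0r | by rewrite subr0].
rewrite sumrB; apply/eqP; rewrite subr_eq0; apply/eqP.
rewrite [in RHS](reindex_inj (inv_inj flipoK)) /=.
under [in RHS]eq_bigl => o do rewrite otail_flip.
under [in RHS]eq_bigr => o _ do rewrite flipoK.
rewrite big_mkcond [in RHS]big_mkcond /=.
transitivity (\sum_(o : A) (if o \in c then (if otail o == v then 1 else 0) else 0) : R).
  by apply: eq_bigr => o _; case: ifP; case: ifP.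
symmetry.
transitivity (\sum_(o : A) (if o \in c then (if ohead o == v then 1 else 0) else 0) : R).
  by apply: eq_bigr => o _; case: ifP; case: ifP.
rewrite !sum_in //.
by rewrite (cycle_sum (fun w => if w == v then 1 else 0) cy).
Qed.


Lemma int_sq0 (w : int) : 0 <= w * (w + 1).
Proof.
case: (lerP 0 w) => h.
  by apply: mulr_ge0 => //; apply: addr_ge0.
apply: mulr_le0; first exact: ltW.
by rewrite -ltzD1 ltrD2r.
Qed.
Lemma int_sq1 (z : int) : 0 <= z * (z - 1) /\ 0 <= z * (z + 1).
Proof.
split; last exact: int_sq0.
by have := int_sq0 (z - 1); rewrite subrK mulrC.
Qed.

Definition cw (x : E -> R) (o : A) : R := 1 - 2 * ochain x o.
Definition Pot (x : E -> R) (p : V -> R) := forall o, p (ohead o) - p (otail o) <= cw x o.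

Lemma flow_pot (mu : E -> R) (p : V -> R) : is_flow src tgt mu ->
  \sum_e mu e * (p (tgt e) - p (src e)) = 0.
Proof.
move=> fl.
have h : \sum_(o : A) ochain mu o * p (otail o) = 0.
  rewrite (partition_big otail xpredT) //=.
  rewrite big1 // => v _.
  transitivity (\sum_(o | otail o == v) ochain mu o * p v).
    by apply: eq_bigr => o /eqP ->.
  by rewrite -mulr_suml fl mul0r.
rewrite sum_pairE in h.
apply/eqP; rewrite -oppr_eq0 -sumrN; apply/eqP; rewrite -[RHS]h; apply: eq_bigr => e _.
by rewrite /ochain /= mulrBr opprD mulNr opprK addrC.
Qed.


Lemma W_xC (x : E -> R) (c : seq A) : uniq (map fst c) ->
  qf (xC c) - 2 * inner x (xC c) = \sum_(o <- c) cw x o.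
Proof.
move=> u; rewrite qf_xC // inner_xC // /cw sumrB -mulr_sumr.
by rewrite -sum1_size natr_sum.
Qed.

Lemma VO_circ (x : E -> R) (c : seq A) : in_VO src tgt x -> is_circuit src tgt c ->
  0 <= \sum_(o <- c) cw x o.
Proof.
move=> [fx hx] [_ u _ cy].
rewrite -W_xC //.
have fm : is_int_flow src tgt (xC c).
  split; first exact: xC_flow.
  exists (fun e => if (e, false) \in c then 1 else if (e, true) \in c then -1 else 0).
  by move=> e; rewrite /xC; case: ifP => _ //; case: ifP.
have := hx _ fm; rewrite qf_sub -subr_ge0.
by rewrite addrAC (addrAC (qf x)) subrr add0r addrC.
Qed.

Lemma key_ineq (m d x : R) (z : int) : m = z%:~R ->
  d <= 1 - 2 * x -> - d <= 1 + 2 * x -> 2 * (x * m) <= m * m - m * d.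
Proof.
move=> hm h1 h2; have [s1 s2] := int_sq1 z.
have e1 : 0 <= m * (m - 1).
  by rewrite hm -[1]/(1%:~R) -intrB -intrM ler0z.
have e2 : 0 <= m * (m + 1).
  by rewrite hm -[1]/(1%:~R) -intrD -intrM ler0z.
case: (lerP 0 z) => hz.
  have m0 : 0 <= m by rewrite hm ler0z.
  have f1 : m <= m * m by rewrite -subr_ge0 -{3}(mulr1 m) -mulrBr.
  have f2 : m * d <= m * (1 - 2 * x) by rewrite ler_wpM2l.
  have -> : 2 * (x * m) = m - m * (1 - 2 * x).
    by rewrite mulrBr mulr1 opprB addrC subrK [RHS]mulrCA (mulrC m x).
  exact: lerB.
have m0 : 0 <= - m by rewrite hm -intrN ler0z oppr_ge0 ltW.
have f1 : - m <= m * m by rewrite -subr_ge0 opprK -{3}(mulr1 m) -mulrDr.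
have f2 : (- m) * (- d) <= (- m) * (1 + 2 * x) by rewrite ler_wpM2l.
rewrite mulrNN in f2.
have -> : 2 * (x * m) = - m - (- m) * (1 + 2 * x).
  by rewrite mulrDr mulr1 mulNr opprB addrC subrK [RHS]mulrCA (mulrC m x).
exact: lerB.
Qed.

Lemma pot_VO (x : E -> R) (p : V -> R) : is_flow src tgt x -> Pot x p ->
  in_VO src tgt x.
Proof.
move=> fx hp; split=> // mu [fm [z hz]].
rewrite qf_sub -subr_ge0 addrAC (addrAC (qf x)) subrr add0r addrC subr_ge0.
rewrite -[qf mu]subr0 -(flow_pot p fm) /qf /inner mulr_sumr -sumrB.
apply: ler_sum => e _; apply: (key_ineq (z := z e)) => //.
- by have := hp (e, false); rewrite /cw /ochain /=.
- have := hp (e, true); rewrite /cw /ochain /= mulrN opprK.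
  by rewrite opprB.
Qed.


Lemma ex_min (X : finType) (P : pred X) (f : X -> R) i0 :
  P i0 -> exists i, P i /\ forall j, P j -> f i <= f j.
Proof.
move=> Pi0; case: (@arg_minP _ R X i0 P f Pi0) => i Pi h.
by exists i.
Qed.

Definition sp (u : V) (s : seq A) : bool :=
  [&& map otail s == belast u (map ohead s), uniq (u :: map ohead s) & uniq (map fst s)].
Definition endp (u : V) (s : seq A) : V := last u (map ohead s).

Lemma sp_size u s : sp u s -> (size s <= #|E|)%N.
Proof.
case/and3P => _ _ u1; rewrite -(size_map fst).
by move/card_uniqP: u1 => <-; exact: max_card.
Qed.

Lemma sp_walk u s : sp u s -> rcons (map otail s) (endp u s) = u :: map ohead s.
Proof. by case/and3P => /eqP -> _ _; rewrite /endp -lastI. Qed.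

Lemma sp_end_notin u s : sp u s -> endp u s \notin map otail s.
Proof.
move=> h; have hw := sp_walk h; case/and3P: h => _ u1 _.
by rewrite -hw rcons_uniq in u1; case/andP: u1.
Qed.

Lemma sp_cat u s1 s2 : sp u (s1 ++ s2) -> sp u s1 /\ sp (endp u s1) s2.
Proof.
case/and3P => /eqP hw u1 u2.
rewrite !map_cat in hw u1 u2; rewrite cat_uniq in u2; case/and3P: u2 => u21 _ u22.
rewrite -cat_cons cat_uniq in u1; case/and3P: u1 => u11 d u12.
rewrite belast_cat in hw.
have [h1 h2] : map otail s1 = belast u (map ohead s1) /\
   map otail s2 = belast (endp u s1) (map ohead s2).
  move/eqP: hw; rewrite eqseq_cat; last by rewrite size_belast !size_map.
  by case/andP => /eqP -> /eqP ->.
split; apply/and3P; split => //; first by apply/eqP.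
  by apply/eqP.
rewrite /= u12 andbT; apply/negP => hin.
move/hasPn: d => /(_ _ hin); rewrite /endp mem_last //.
Qed.



Lemma sp_last_arc u s o' : sp u s -> o' \in s -> ohead o' = endp u s ->
  exists s', s = rcons s' o'.
Proof.
move=> h oin; case/splitPr: oin h => s1 s2 h.
case: s2 h => [|o2 s2] h.
  by move=> _; exists s1; rewrite cats1.
have [_ ] := sp_cat h; case/and3P => _ /= /and3P [_ nin _] _.
rewrite /endp map_cat last_cat /= => e.
exfalso; move/negP: nin; apply; rewrite e.
exact: mem_last.
Qed.

Lemma sp_rcons u s o : sp u s -> otail o = endp u s ->
  ohead o \notin u :: map ohead s -> o.1 \notin map fst s ->
  sp u (rcons s o) /\ endp u (rcons s o) = ohead o.
Proof.
move=> h et nh nf; have hw := sp_walk h; case/and3P: h => _ u1 u2.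
split; last by rewrite /endp map_rcons last_rcons.
apply/and3P; split.
- by rewrite !map_rcons et hw belast_rcons.
- by rewrite map_rcons -rcons_cons rcons_uniq nh.
- by rewrite map_rcons rcons_uniq nf.
Qed.

Lemma sp_circuit h s o : sp h s -> endp h s = otail o -> ohead o = h ->
  o.1 \notin map fst s -> is_circuit src tgt (rcons s o).
Proof.
move=> sps et eh nf; have hw := sp_walk sps; case/and3P: sps => _ u1 u2.
split.
- by case: s {hw u1 u2 nf et}.
- by rewrite map_rcons rcons_uniq nf.
- by rewrite map_rcons -et hw.
- rewrite (cycle_path o) last_rcons.
  have -> : path (fun o1 o2 => ohead o1 == otail o2) o (rcons s o) = path hrel o (rcons s o) by [].
  by rewrite path_ht !map_rcons belast_rcons eh -et hw.
Qed.


Lemma sum_rcons (F : A -> R) s o : \sum_(i <- rcons s o) F i = \sum_(i <- s) F i + F o.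
Proof. by rewrite -cats1 big_cat big_seq1. Qed.

Lemma sp_split u s h : h \in u :: map ohead s ->
  exists s1 s2, s = s1 ++ s2 /\ endp u s1 = h.
Proof.
rewrite in_cons => /orP [/eqP ->|]; first by exists [::], s.
case/mapP => o' oin ->; case/splitPr: oin => s1 s2.
exists (rcons s1 o'), s2; split; first by rewrite cat_rcons.
by rewrite /endp map_rcons last_rcons.
Qed.

Lemma endp_rcons_walk u s o' : sp u (rcons s o') -> endp u s = otail o'.
Proof.
case/and3P => /eqP hw _ _; move: hw.
rewrite !map_rcons belast_rcons => /(congr1 (last (otail o'))).
by rewrite last_rcons /= => ->.
Qed.

Lemma pot_exists (w : A -> R) :
  (forall c, is_circuit src tgt c -> 0 <= \sum_(o <- c) w o) ->
  (forall o, 0 <= w o + w (flipo o)) ->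
  exists p : V -> R, forall o, p (ohead o) - p (otail o) <= w o.
Proof.
move=> H1 H2.
pose wt (s : seq A) := \sum_(o <- s) w o.
have hmin : forall v, exists us : V * seq A, [/\ sp us.1 us.2, endp us.1 us.2 = v &
   forall u s, sp u s -> endp u s = v -> wt us.2 <= wt s].
  move=> v.
  pose P := fun x : (V * {bseq #|E| of A})%type => sp x.1 x.2 && (endp x.1 x.2 == v).
  have P0 : P (v, [bseq]) by rewrite /P /sp /endp /= eqxx.
  have [i [Pi hi]] := ex_min (fun x : (V * {bseq #|E| of A})%type => wt x.2) P0.
  case/andP: Pi => sp1 /eqP e1.
  exists (i.1, val i.2); split => // u s sps es.
  have := hi (u, Bseq (sp_size sps)); rewrite /P /= sps es eqxx; exact.
pose f v := proj1_sig (constructive_indefinite_description _ (hmin v)).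
have hf v : [/\ sp (f v).1 (f v).2, endp (f v).1 (f v).2 = v &
   forall u s, sp u s -> endp u s = v -> wt (f v).2 <= wt s].
  exact: (proj2_sig (constructive_indefinite_description _ (hmin v))).
exists (fun v => wt (f v).2) => o.
rewrite lerBlDl.
have [sp0 e0 _] := hf (otail o).
set u0 := (f (otail o)).1 in sp0 e0; set s0 := (f (otail o)).2 in sp0 e0 *.
have [_ _ mh] := hf (ohead o).
suff [u [s [sps es hs]]] : exists u s, [/\ sp u s, endp u s = ohead o & wt s <= wt s0 + w o].
  exact: le_trans (mh _ _ sps es) hs.
case: (boolP (o.1 \in map fst s0)) => hf1.
  case/mapP: hf1 => o' o'in eo.
  have eo' : o' = o \/ o' = flipo o.
    clear -eo; move: eo; case: o' => e' b'; case: o => e b /= ->.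
    by rewrite /flipo /=; case: b; case: b'; auto.
  case: eo' => eo'; subst o'.
    by exfalso; move/negP: (sp_end_notin sp0); apply; rewrite e0; apply: map_f.
  have hh : ohead (flipo o) = endp u0 s0 by rewrite ohead_flip e0.
  have [s' es'] := sp_last_arc sp0 o'in hh.
  rewrite es' in sp0.
  have sp0' : sp u0 (s' ++ [:: flipo o]) by rewrite cats1.
  have [sp' _] := sp_cat sp0'.
  exists u0, s'; split => //.
    by rewrite (endp_rcons_walk sp0) otail_flip.
  rewrite /wt es' sum_rcons -/(wt s') -addrA lerDl addrC.
  exact: H2.
case: (boolP (ohead o \in u0 :: map ohead s0)) => hin.
  have [s1 [s2 [es2 eh]]] := sp_split hin.
  rewrite es2 in sp0 e0 hf1.
  have [sp1 sp2] := sp_cat sp0; rewrite eh in sp2.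
  have ec : endp (ohead o) s2 = otail o.
    by rewrite -e0 /endp map_cat last_cat -/(endp u0 s1) eh.
  have nf : o.1 \notin map fst s2.
    by apply: contra hf1; rewrite map_cat mem_cat => ->; rewrite orbT.
  have hc := H1 _ (sp_circuit sp2 ec erefl nf).
  exists u0, s1; split => //.
  rewrite /wt es2 big_cat /= -/(wt s1) -/(wt s2); rewrite sum_rcons -/(wt s2) in hc.
  by rewrite -addrA lerDl.
have [spr er] := sp_rcons sp0 (esym e0) hin hf1.
exists u0, (rcons s0 o); split => //.
by rewrite /wt sum_rcons.
Qed.


Definition S (x : E -> R) (c : seq A) := \sum_(o <- c) cw x o.

Lemma cw_flip x o : cw x o + cw x (flipo o) = 2.
Proof.
rewrite /cw ochain_flip mulrN opprK addrCA !addrA subrK.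
by [].
Qed.

Lemma VO_pot x : in_VO src tgt x -> exists p, Pot x p.
Proof.
move=> hx; have H2 : forall o, 0 <= cw x o + cw x (flipo o) by move=> o; rewrite cw_flip.
have [p hp] := @pot_exists (cw x) (fun c hc => VO_circ hx hc) H2.
by exists p.
Qed.

Lemma VOc_VO x : is_flow src tgt x -> (forall c, is_circuit src tgt c -> 0 <= S x c) ->
  in_VO src tgt x.
Proof.
move=> fx hc; have H2 : forall o, 0 <= cw x o + cw x (flipo o) by move=> o; rewrite cw_flip.
have [p hp] := @pot_exists (cw x) hc H2.
exact: pot_VO fx hp.
Qed.

Lemma VO_S x c : in_VO src tgt x -> is_circuit src tgt c -> 0 <= S x c.
Proof. exact: VO_circ. Qed.

Lemma S_slack x p c : Pot x p -> is_circuit src tgt c ->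
  S x c = \sum_(o <- c) (cw x o - (p (ohead o) - p (otail o))).
Proof.
move=> hp [_ _ _ cy].
rewrite /S [RHS]sumrB [X in _ - X]sumrB (cycle_sum p cy) subrr subr0.
by []. Qed.

Lemma tight_arc x p c o : Pot x p -> is_circuit src tgt c -> S x c = 0 -> o \in c ->
  p (ohead o) - p (otail o) = cw x o.
Proof.
move=> hp hc h0 oc; rewrite (S_slack hp hc) in h0.
move/eqP: h0; rewrite psumr_eq0; last by move=> i _; rewrite subr_ge0.
move/allP => /(_ _ oc) /=; rewrite subr_eq0 => /eqP ->. by [].
Qed.

Lemma arcs_tight x p c : Pot x p -> is_circuit src tgt c ->
  (forall o, o \in c -> p (ohead o) - p (otail o) = cw x o) -> S x c = 0.
Proof.
move=> hp hc h; rewrite (S_slack hp hc) big_seq big1 // => o oc.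
by rewrite h // subrr.
Qed.

Lemma inner_eq (x l l' : E -> R) : (forall e, l e = l' e) -> inner x l = inner x l'.
Proof. by move=> h; apply: eq_bigr => e _; rewrite h. Qed.
Lemma qf_eq (l l' : E -> R) : (forall e, l e = l' e) -> qf l = qf l'.
Proof. by move=> h; apply: eq_bigr => e _; rewrite h. Qed.

Lemma Hlam_S lam c x : (forall e, lam e = xC c e) -> is_circuit src tgt c ->
  (in_Hlam src tgt lam x <-> is_flow src tgt x /\ S x c = 0).
Proof.
move=> hl hc; have u : uniq (map fst c) by case: hc.
rewrite /in_Hlam (inner_eq x hl) (qf_eq hl).
have e : S x c = qf (xC c) - 2 * inner x (xC c) by rewrite W_xC.
rewrite e; split => -[fx h]; split => //.
  by rewrite h subrr.
by apply/eqP; rewrite eq_sym -subr_eq0 h.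
Qed.

Lemma supp_xC (lam : E -> R) (c : seq A) o : (forall e, lam e = xC c e) -> uniq (map fst c) ->
  (supp lam o <-> o \in c).
Proof.
move=> hl u; rewrite /supp.
have -> : ochain lam o = ochain (xC c) o by rewrite /ochain !hl.
rewrite ochain_xC //; case: ifP => h; first by split => // _; exact: ltr01.
case: ifP => _; split => //; rewrite ?oppr_gt0 ?ltr10 ?ltxx //.
Qed.


Lemma path_reach (D : A -> Prop) a s : path hrel a s -> (forall y, y \in s -> D y) ->
  clos_refl_trans V (darc src tgt D) (ohead a) (ohead (last a s)).
Proof.
elim: s a => [|y s IH] a /=; first by move=> _ _; apply: rt_refl.
case/andP => /eqP hy ps hD.
apply: (@rt_trans _ _ _ (ohead y)); last first.
  by apply: IH ps _ => z zs; apply: hD; rewrite in_cons zs orbT.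
apply: rt_step; exists y; split => //; by apply: hD; rewrite mem_head.
Qed.

Lemma cycle_reach (D : A -> Prop) c o : cycle hrel c -> o \in c ->
  (forall y, y \in c -> D y) ->
  clos_refl_trans V (darc src tgt D) (ohead o) (otail o).
Proof.
move=> cy oc hD; case: (rot_to oc) => i s' er.
have : cycle hrel (o :: s') by rewrite -er rot_cycle.
rewrite /= rcons_path => /andP [ps /eqP hl].
rewrite -hl; apply: path_reach ps _ => z zs; apply: hD.
by rewrite -(mem_rot i) er; rewrite in_cons zs orbT.
Qed.

Lemma sc_of (D : A -> Prop) :
  (forall o, D o -> clos_refl_trans V (darc src tgt D) (ohead o) (otail o)) ->
  strongly_connected src tgt D.
Proof.
move=> h u v; elim => [a b [ab|ba]| a | a b c _ IH1 _ IH2].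
- exact: rt_step.
- by case: ba => o [Do <- <-]; apply: h.
- exact: rt_refl.
- exact: rt_trans IH1 IH2.
Qed.


Definition comb (a b : R) (x y : E -> R) := fun e => a * x e + b * y e.

Lemma ochain_comb a b x y o : ochain (comb a b x y) o = a * ochain x o + b * ochain y o.
Proof. by rewrite /ochain /comb; case: o.2 => //; rewrite opprD -!mulrN. Qed.

Lemma comb_flow a b x y : is_flow src tgt x -> is_flow src tgt y ->
  is_flow src tgt (comb a b x y).
Proof.
move=> fx fy v; under eq_bigr => o _ do rewrite ochain_comb.
by rewrite big_split /= -!mulr_sumr fx fy !mulr0 addr0.
Qed.

Lemma comb_S a b x y c : a + b = 1 -> S (comb a b x y) c = a * S x c + b * S y c.
Proof.
move=> ab; rewrite /S !mulr_sumr -big_split /=; apply: eq_bigr => o _.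
rewrite /cw ochain_comb !mulrBr !mulr1 mulrDr.
rewrite (mulrCA a) (mulrCA b) addrACA -ab opprD.
by [].
Qed.

Lemma comb_inner a b f x y : inner f (comb a b x y) = a * inner f x + b * inner f y.
Proof.
rewrite /inner !mulr_sumr -big_split /=; apply: eq_bigr => e _.
by rewrite /comb mulrDr (mulrCA a) (mulrCA b).
Qed.

Lemma circuit_size (c : seq A) : is_circuit src tgt c -> (size c <= #|E|)%N.
Proof.
case=> _ u1 _ _; rewrite -(size_map fst).
by move/card_uniqP: u1 => <-; exact: max_card.
Qed.

Definition Lall : seq (seq A) := map val (enum {bseq #|E| of A}).

Lemma Lall_circ c : is_circuit src tgt c -> c \in Lall.
Proof.
move=> hc; have hs := circuit_size hc.
have -> : c = val (Bseq hs) by [].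
by apply: map_f; rewrite mem_enum.
Qed.

Lemma half_sum : 2^-1 + 2^-1 = 1 :> R.
Proof. by rewrite [RHS](splitr 1) mul1r. Qed.

Lemma half_gt0 : 0 < 2^-1 :> R.
Proof. by rewrite invr_gt0 ltr0n. Qed.

Lemma pos_mid (a b : R) : 0 < a -> 0 <= b -> 0 < 2^-1 * a + 2^-1 * b.
Proof.
move=> ha hb; apply: lt_le_trans (_ : 0 < 2^-1 * a) _.
  by rewrite mulr_gt0 // half_gt0.
by rewrite lerDl mulr_ge0 // ltW // half_gt0.
Qed.


Lemma eps_ex (L : seq (seq A)) (f g : seq A -> R) (P : seq A -> Prop) :
  (forall c, P c -> 0 < f c) ->
  exists eps, 0 < eps /\ forall d, 0 <= d -> d <= eps ->
    forall c, c \in L -> P c -> d * (g c - f c) <= f c.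
Proof.
move=> hP; elim: L => [|c L [eps [eps0 heps]]].
  by exists 1; split => // d _ _ c.
case: (classic (P c)) => Pc; last first.
  exists eps; split => // d d0 de c'; rewrite in_cons => /orP [/eqP ->|c'L] //.
  exact: heps.
have s0 := hP c Pc.
have [ec [ec0 hec]] : exists ec, 0 < ec /\ forall d, 0 <= d -> d <= ec -> d * (g c - f c) <= f c.
  case: (lerP (g c - f c) 0) => h.
    exists 1; split => // d d0 _; apply: le_trans (ltW s0).
    by rewrite mulr_ge0_le0.
  exists (f c / (g c - f c)); split; first by rewrite divr_gt0.
  move=> d d0 de; apply: le_trans (ler_wpM2r (ltW h) de) _.
  by rewrite divfK // gt_eqF.
exists (Order.min eps ec); split; first by rewrite lt_min eps0 ec0.
move=> d d0; rewrite le_min => /andP [d1 d2] c'; rewrite in_cons => /orP [/eqP ->|c'L] //.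
  by move=> _; apply: hec.
exact: heps.
Qed.

Section Face.
Variables (F : (E -> R) -> Prop) (av : E -> R) (bv : R).
Hypothesis hF : forall y, in_VO src tgt y -> inner av y <= bv.
Hypothesis hFx : forall x, F x <-> (in_VO src tgt x /\ inner av x = bv).

Lemma F_VO x : F x -> in_VO src tgt x.
Proof. by case/hFx. Qed.

Lemma F_mid x1 x2 : F x1 -> F x2 -> F (comb 2^-1 2^-1 x1 x2).
Proof.
move=> /hFx [v1 i1] /hFx [v2 i2]; apply/hFx; split.
  apply: VOc_VO; first by apply: comb_flow; [case: v1|case: v2].
  move=> c hc; rewrite comb_S ?half_sum //.
  apply: addr_ge0; apply: mulr_ge0. all: try exact: (ltW half_gt0). exact: VO_S v1 hc. exact: VO_S v2 hc.
by rewrite comb_inner i1 i2 -mulrDl half_sum mul1r.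
Qed.

Lemma relint x0 (L : seq (seq A)) : F x0 ->
  exists x, F x /\ forall c, c \in L -> is_circuit src tgt c ->
     (exists x', F x' /\ 0 < S x' c) -> 0 < S x c.
Proof.
move=> Fx0; elim: L => [|c L [x1 [Fx1 h1]]]; first by exists x0.
case: (classic (is_circuit src tgt c /\ exists x', F x' /\ 0 < S x' c)); last first.
  move=> nc; exists x1; split => // c'; rewrite in_cons => /orP [/eqP ->|c'L] hc hx.
    by exfalso; apply: nc.
  exact: h1.
move=> [hc [x' [Fx' hx']]].
case: (ltrP 0 (S x1 c)) => hs.
  exists x1; split => // c'; rewrite in_cons => /orP [/eqP ->|c'L] //.
  exact: h1.
exists (comb 2^-1 2^-1 x1 x'); split; first exact: F_mid.
move=> c'; rewrite in_cons => /orP [/eqP ->|c'L] hc' hx''; rewrite comb_S ?half_sum //.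
  by rewrite addrC; apply: pos_mid => //; apply: VO_S (F_VO Fx1) hc.
apply: pos_mid; first exact: h1.
exact: VO_S (F_VO Fx') hc'.
Qed.


Lemma face_char x0 y : F x0 -> in_VO src tgt y ->
  (forall c, is_circuit src tgt c -> (forall x, F x -> S x c = 0) -> S y c = 0) -> F y.
Proof.
move=> Fx0 Vy hy.
have [xs [Fxs hxs]] := relint Lall Fx0.
have hxs' : forall c, is_circuit src tgt c -> (forall x, F x -> S x c = 0) \/ 0 < S xs c.
  move=> c hc; case: (classic (forall x, F x -> S x c = 0)) => h; [by left | right].
  apply (hxs c (Lall_circ hc) hc).
  have [x' hx'] := not_all_ex_not _ _ h.
  have [Fx' nx'] := imply_to_and _ _ hx'.
  exists x'; split => //; rewrite lt_neqAle eq_sym; apply/andP; split.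
    by apply/eqP.
  exact: VO_S (F_VO Fx') hc.
have [eps [eps0 heps]] := @eps_ex Lall (S xs) (S y)
   (fun c => is_circuit src tgt c /\ 0 < S xs c) (fun c h => h.2).
have ab : 1 + eps + - eps = 1 by rewrite addrK.
have Vz : in_VO src tgt (comb (1 + eps) (- eps) xs y).
  apply: VOc_VO.
    by apply: comb_flow; [case: (F_VO Fxs) | case: Vy].
  move=> c hc; rewrite comb_S //.
  case: (hxs' c hc) => [h|h].
    by rewrite (h xs Fxs) (hy c hc h) !mulr0 addr0.
  have := heps eps (ltW eps0) (lexx eps) c (Lall_circ hc) (conj hc h).
  rewrite -subr_ge0 => h'; apply: le_trans h' _.
  by rewrite mulrBr mulrDl mul1r mulNr opprB addrA addrC.
have := hF Vz; rewrite comb_inner.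
have [_ ixs] := (hFx xs).1 Fxs; rewrite ixs => hz.
apply/hFx; split => //; apply: le_anti; rewrite hF //=.
have : eps * bv <= eps * inner av y.
  by move: hz; rewrite mulrDl mul1r mulNr -addrA gerDl subr_le0.
by rewrite ler_pM2l.
Qed.

End Face.


Lemma phi_circ (F : (E -> R) -> Prop) o : phi src tgt F o ->
  exists c, [/\ is_circuit src tgt c, o \in c,
    (forall x, F x -> is_flow src tgt x /\ S x c = 0) &
    (forall o', o' \in c -> phi src tgt F o')].
Proof.
case=> lam [[c [hc hl]] hT hs].
have u : uniq (map fst c) by case: hc.
exists c; split.
- exact: hc.
- by apply/(supp_xC o hl u).
- by move=> x Fx; apply/(Hlam_S _ hl hc); apply: hT.
- move=> o' o'c; exists lam; split => //; first by exists c.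
  by apply/(supp_xC o' hl u).
Qed.

Lemma phi_slack (F : (E -> R) -> Prop) x p o : F x -> Pot x p -> phi src tgt F o ->
  p (ohead o) - p (otail o) = cw x o.
Proof.
move=> Fx hp /phi_circ [c [hc oc hT _]].
exact: (tight_arc hp hc (hT x Fx).2 oc).
Qed.

Lemma phi_orient (F : (E -> R) -> Prop) x : F x -> in_VO src tgt x ->
  is_orientation (phi src tgt F).
Proof.
move=> Fx Vx e [h1 h2]; have [p hp] := VO_pot Vx.
have s1 := phi_slack Fx hp h1; have s2 := phi_slack Fx hp h2.
have e0 : cw x (e, false) + cw x (e, true) = 0.
  by rewrite -s1 -s2 /Defs.ohead /Defs.otail /= addrA subrK subrr.
have := cw_flip x (e, false); rewrite /flipo /= e0 => /eqP.
by rewrite eq_sym pnatr_eq0.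
Qed.

Lemma phi_sc (F : (E -> R) -> Prop) : strongly_connected src tgt (phi src tgt F).
Proof.
apply: sc_of => o /phi_circ [c [[_ _ _ cy] oc _ hall]].
exact: cycle_reach cy oc hall.
Qed.

Lemma tight_char (F : (E -> R) -> Prop) c :
  (forall x, F x -> in_VO src tgt x) -> is_circuit src tgt c ->
  ((forall x, F x -> S x c = 0) <-> (forall o, o \in c -> phi src tgt F o)).
Proof.
move=> FV hc; have u : uniq (map fst c) by case: hc.
split.
  move=> h o oc; exists (xC c); split.
  - by exists c.
  - move=> x Fx; apply/(Hlam_S _ (fun e => erefl) hc); split; last exact: h.
    by case: (FV x Fx).
  - by apply/(supp_xC o (fun e => erefl) u).
move=> h x Fx; have [p hp] := VO_pot (FV x Fx).
apply: (arcs_tight hp hc) => o oc.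
exact: phi_slack Fx hp (h o oc).
Qed.

End Work.

Theorem mainTheorem7 (R : realFieldType) (V E : finType) (src tgt : E -> V) :
  connected_graph src tgt ->
  (* phi is a well-defined map FP -> SC *)
  (forall F : (E -> R) -> Prop, nonempty_face_VO src tgt F -> in_SC src tgt (phi src tgt F)) /\
  (* injective *)
  (forall F1 F2 : (E -> R) -> Prop,
      nonempty_face_VO src tgt F1 -> nonempty_face_VO src tgt F2 ->
      (forall o, phi src tgt F1 o <-> phi src tgt F2 o) ->
      forall x, F1 x <-> F2 x) /\
  (* order-preserving *)
  (forall F1 F2 : (E -> R) -> Prop,
      nonempty_face_VO src tgt F1 -> nonempty_face_VO src tgt F2 ->
      (forall x, F1 x -> F2 x) ->
      SC_le (phi src tgt F1) (phi src tgt F2)).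
Proof.
move=> _.
have FV : forall F : (E -> R) -> Prop, nonempty_face_VO src tgt F -> forall x, F x -> in_VO src tgt x.
  by move=> F [[av [bv [hF hFx]]] _] x /hFx [].
have orient : forall F : (E -> R) -> Prop, nonempty_face_VO src tgt F -> is_orientation (phi src tgt F).
  move=> F hne; have [_ [x0 Fx0]] := hne.
  exact: phi_orient Fx0 (FV F hne x0 Fx0).
split; [|split].
- move=> F hne; split; [exact: orient | exact: phi_sc].
- have inc : forall F1 F2 : (E -> R) -> Prop,
      nonempty_face_VO src tgt F1 -> nonempty_face_VO src tgt F2 ->
      (forall o, phi src tgt F2 o -> phi src tgt F1 o) ->
      forall x, F1 x -> F2 x.
    move=> F1 F2 h1 h2 hp x F1x.
    have [[av [bv [hF hFx]]] [x0 Fx0]] := h2.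
    apply: (face_char hF hFx Fx0 (FV F1 h1 x F1x)) => c hc T2.
    have T2' := (tight_char (FV F2 h2) hc).1 T2.
    have T1 := (tight_char (FV F1 h1) hc).2 (fun o oc => hp o (T2' o oc)).
    exact: T1 x F1x.
  move=> F1 F2 h1 h2 heq x; split.
    by apply: inc h1 h2 _ x => o /heq.
  by apply: inc h2 h1 _ x => o /heq.
- move=> F1 F2 h1 h2 sub.
  have mono : forall o, phi src tgt F2 o -> phi src tgt F1 o.
    by move=> o [lam [hl hT hs]]; exists lam; split => // x F1x; apply: hT; apply: sub.
  split.
    by move=> e [h|h]; [left|right]; apply: mono.
  move=> [e b]; split.
    move=> h; split; first exact: mono.
    by case: b h => h; [right|left].
  case: b => -[h1o [hu|hu]] //=.
  + exfalso; exact: (orient F1 h1 e (conj (mono _ hu) h1o)).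
  + exfalso; exact: (orient F1 h1 e (conj h1o (mono _ hu))).
Qed.
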